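(* Let $G$ be a connected graph with at least one edge, and let $l(G)=\min\{|L(uv)|: uv\in E(G)\}$. Then $l(G)=|V(G)|-1$ if and only if $G$ is isomorphic to a cycle of odd length.
   Context: All graphs are finite and simple; $d$ is the shortest-path distance. For an edge $uv$, $L(uv)=\{x\in V(G): d(u,x)\neq d(v,x)\}$. *)

(* Defs.v *)
(* A simple graph is a symmetric irreflexive relation e on a finType T. *)
From mathcomp Require Import all_boot.
Set Implicit Arguments. Unset Strict Implicit. Unset Printing Implicit Defensive.

Section Graph.
Variables (T : finType) (e : rel T).

Fixpoint ball (k : nat) (u : T) : {set T} :=
  match k with
  | 0 => [set u]
  | k'.+1 => ball k' u :|: [set y | [exists x in ball k' u, e x y]]
  end.

(* shortest-path distance: least k with x in ball k u
   (equals #|T| when x is unreachable; irrelevant for connected graphs) *)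
Definition dist (u x : T) : nat :=
  find (fun k => x \in ball k u) (iota 0 #|T|).

Definition L (u v : T) : {set T} := [set x | dist u x != dist v x].

Definition connected : Prop := forall x y : T, connect e x y.

Definition lG : nat :=
  \big[minn/#|T|]_(p : T * T | e p.1 p.2) #|L p.1 p.2|.
End Graph.

(* the cycle C_n on vertex set 'I_n (a cycle graph when n >= 3) *)
Definition cycle_rel (n : nat) : rel 'I_n :=
  fun i j => (nat_of_ord j == (i.+1 %% n)) || (nat_of_ord i == (j.+1 %% n)).

Definition iso_odd_cycle (T : finType) (e : rel T) : Prop :=
  exists n : nat, [/\ odd n, 3 <= n &
    exists f : 'I_n -> T, bijective f /\ forall i j, e (f i) (f j) = @cycle_rel n i j].

(* Main.v *)
Require Import Defs.
From mathcomp Require Import all_boot zify.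
Set Implicit Arguments. Unset Strict Implicit. Unset Printing Implicit Defensive.

Definition walk (T : Type) (e : rel T) (p : nat -> T) (j : nat) :=
  forall k, k < j -> e (p k) (p k.+1).

Section G.
Variables (T : finType) (e : rel T).
Hypotheses (esym : symmetric e) (eirr : irreflexive e).

Lemma ball_mono k u : ball e k u \subset ball e k.+1 u.
Proof. by rewrite /= subsetUl. Qed.

Lemma ball_monoS k k' u x : k <= k' -> x \in ball e k u -> x \in ball e k' u.
Proof.
elim: k' => [|k' IH]; first by rewrite leqn0 => /eqP->.
rewrite leq_eqVlt ltnS => /orP[/eqP-> //|/IH H /H]. by move/(subsetP (ball_mono _ _)).
Qed.

Lemma ball_nb k u y z : y \in ball e k u -> e y z -> z \in ball e k.+1 u.
Proof. move=> Hy Hyz /=; rewrite in_setU in_set; apply/orP; right; apply/existsP; exists y; by rewrite Hy. Qed.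

Lemma dist_le k u x : x \in ball e k u -> dist e u x <= k.
Proof.
move=> H; rewrite /dist.
case: (ltnP k #|T|) => Hk; last by apply: leq_trans (find_size _ _) _; rewrite size_iota.
rewrite leqNgt; apply/negP => /(before_find 0). by rewrite nth_iota // add0n H.
Qed.

Lemma path_ball u p : path e u p -> last u p \in ball e (size p) u.
Proof.
elim/last_ind: p => [|q z IH]; first by rewrite /= in_set1.
rewrite rcons_path last_rcons size_rcons => /andP [/IH H Hz]. exact: ball_nb H Hz.
Qed.

Lemma reach_ball u x : connect e u x -> exists2 k, k < #|T| & x \in ball e k u.
Proof.
case/connectP => p Hp ->.
case: (shortenP Hp) => p' Hp' Hu _.
exists (size p'); last exact: path_ball.
move/card_uniqP: Hu => /= H. apply: leq_trans (max_card (mem (u :: p'))). by rewrite H.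
Qed.

Lemma dist_ball u x : connect e u x -> x \in ball e (dist e u x) u /\ dist e u x < #|T|.
Proof.
case/reach_ball => k Hk Hx.
have Hh : has (fun k => x \in ball e k u) (iota 0 #|T|).
  apply/hasP; exists k => //; by rewrite mem_iota add0n.
have Hl : dist e u x < #|T| by rewrite /dist -{2}(size_iota 0 #|T|) -has_find.
split => //.
have := nth_find 0 Hh. by rewrite nth_iota // add0n.
Qed.

Hypothesis conn : connected e.

Lemma ball_shift a b k : e b a -> ball e k a \subset ball e k.+1 b.
Proof.
move=> Hba; elim: k => [|k IH].
  apply/subsetP => y; rewrite in_set1 => /eqP ->. apply: (ball_nb (y:=b)) => //. by rewrite /= in_set1.
apply/subsetP => y /=; rewrite in_setU in_set => /orP [H|/existsP [z /andP [Hz Hzy]]].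
  rewrite in_setU; apply/orP; left; exact: (subsetP IH).
rewrite in_setU; apply/orP; right; rewrite in_set; apply/existsP; exists z; rewrite Hzy andbT; exact: (subsetP IH).
Qed.

Lemma dist_edge a b x : e a b -> dist e b x <= (dist e a x).+1.
Proof.
move=> Hab. apply: dist_le. have Hba : e b a by rewrite esym.
apply: (subsetP (ball_shift _ Hba)). exact: (dist_ball (conn a x)).1.
Qed.

Lemma ball_walk k u x : x \in ball e k u ->
  exists j, exists p, [/\ j <= k, p 0 = u, p j = x & walk e p j].
Proof.
elim: k x => [|k IH] x /=.
  rewrite in_set1 => /eqP ->; exists 0, (fun _ => u); split => // i; by rewrite ltn0.
rewrite in_setU in_set => /orP [/IH [j [p [Hj H0 Hjx Hw]]]|/existsP [y /andP [/IH [j [p [Hj H0 Hjx Hw]]] Hyx]]].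
  exists j, p; split => //; lia.
exists j.+1, (fun i => if i <= j then p i else x); split.
- lia.
- by rewrite H0.
- by rewrite ltnn.
move=> i Hi; rewrite ltnS in Hi; rewrite Hi.
case: (ltnP i j) => Hij; first by apply Hw.
have E : i = j by lia. subst i. by rewrite Hjx.
Qed.

Lemma walk_ball p j : walk e p j -> p j \in ball e j (p 0).
Proof.
elim: j => [|j IH] Hw; first by rewrite /= in_set1.
apply: (ball_nb (y := p j)); last by apply: Hw.
apply: IH => i Hi; apply: Hw; lia.
Qed.

Lemma dist_walk u x : exists p, [/\ p 0 = u, p (dist e u x) = x & walk e p (dist e u x)].
Proof.
have [Hx _] := dist_ball (conn u x).
have [j [p [Hj H0 Hjx Hw]]] := ball_walk Hx.
have := dist_le (walk_ball Hw). rewrite Hjx H0 => Hd.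
have Ej : j = dist e u x by lia.
exists p; by rewrite -Ej.
Qed.

Lemma parity g M x : walk e g M -> g M = g 0 -> odd M ->
  exists2 k, k < M & dist e (g k) x = dist e (g k.+1) x.
Proof.
move=> Hw Hc HM.
case: (boolP [exists k : 'I_M, dist e (g k) x == dist e (g k.+1) x]).
  by case/existsP => k /eqP H; exists k.
move/existsPn => H.
have: forall k, k <= M -> odd (dist e (g k) x) = odd (dist e (g 0) x) (+) odd k.
  elim=> [|k IH] Hk; first by rewrite addbF.
  have Hk' : k < M := Hk.
  have /eqP Hne := H (Ordinal Hk').
  have h1 := dist_edge x (Hw k Hk').
  have h2 : dist e (g k) x <= (dist e (g k.+1) x).+1.
    apply: dist_edge. rewrite esym. exact: Hw.
  have E : odd (dist e (g k.+1) x) = ~~ odd (dist e (g k) x).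
    have : dist e (g k.+1) x = (dist e (g k) x).+1 \/ dist e (g k) x = (dist e (g k.+1) x).+1.
      simpl in Hne. lia.
    by case=> ->; rewrite /= ?negbK.
  rewrite E IH ?(ltnW Hk) //=. by case: (odd _); case: (odd k).
move/(_ M (leqnn M)). rewrite Hc HM. by case: (odd _).
Qed.

Lemma dist_bfs u (h : T -> nat) : h u = 0 -> (forall a b, e a b -> h b <= (h a).+1) ->
  (forall x, x != u -> exists2 y, e y x & (h y).+1 = h x) ->
  forall x, dist e u x = h x.
Proof.
move=> H0 He Hn.
have Hb : forall k x, (x \in ball e k u) = (h x <= k).
  elim=> [|k IH] x /=.
    rewrite in_set1; apply/idP/idP => [/eqP->|hx]; first by rewrite H0.
    apply/negPn/negP => /Hn [y _ Hy]. lia.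
  rewrite in_setU in_set IH; apply/idP/idP.
    case/orP => [H|/existsP [y /andP [Hy Hyx]]]; first lia.
    rewrite IH in Hy; have := He _ _ Hyx; lia.
  move=> H; case: (leqP (h x) k) => Hk; first by rewrite ?Hk.
  have Hxu : x != u by apply/negP => /eqP E; rewrite E H0 in Hk.
  case: (Hn x Hxu) => y Hyx Hy.
  apply/orP; right; apply/existsP; exists y; rewrite IH Hyx andbT; lia.
move=> x; apply/eqP; rewrite eqn_leq; apply/andP; split.
  by apply: dist_le; rewrite Hb.
by rewrite -Hb; apply: (dist_ball (conn u x)).1.
Qed.

End G.

Lemma sub_walk (T : Type) (e : rel T) g M a b : walk e g M -> a <= b -> b <= M ->
  walk e (fun k => g (a + k)) (b - a).
Proof. move=> Hw Hab HbM k Hk; rewrite addnS; apply: Hw; lia. Qed.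

Lemma wrap_walk (T : Type) (e : rel T) g M a b : walk e g M -> g M = g 0 -> a <= b -> b < M ->
  walk e (fun k => if k < M - b then g (b + k) else g (k - (M - b))) (M - b + a).
Proof.
move=> Hw Hc Hab HbM k Hk.
case: (ltnP k.+1 (M - b)) => H1.
  have H2 : k < M - b by lia. rewrite H2 addnS; apply: Hw; lia.
case: (ltnP k (M - b)) => H2.
  have Ek : b + k = M.-1 by lia.
  have -> : k.+1 - (M - b) = 0 by lia.
  have HM : M.-1.+1 = M by lia.
  rewrite Ek -Hc. move: (Hw M.-1); rewrite HM; apply; lia.
have -> : k.+1 - (M - b) = (k - (M - b)).+1 by lia. apply: Hw; lia.
Qed.

Lemma close_walk (T : Type) (e : rel T) h M : walk e h M -> e (h M) (h 0) ->
  walk e (fun k => if k <= M then h k else h 0) M.+1.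
Proof.
move=> Hw He k Hk. rewrite ltnS in Hk. rewrite Hk.
case: (ltnP k M) => H; first exact: Hw.
have E : k = M by lia. by subst k.
Qed.

Section Main.
Variables (T : finType) (e : rel T).
Hypotheses (esym : symmetric e) (eirr : irreflexive e) (conn : connected e).
Hypothesis H1 : forall u v x y, e u v -> dist e u x = dist e v x -> dist e u y = dist e v y -> x = y.

Lemma main M : forall g, walk e g M -> g M = g 0 -> odd M -> iso_odd_cycle e.
Proof.
elim/ltn_ind: M => M IH g Hw Hc HM.
have IH' : forall h N, N < M -> walk e h N -> h N = h 0 -> odd N -> iso_odd_cycle e.
  move=> h N HN; exact: IH.
case: (boolP [exists a : 'I_M, exists b : 'I_M, (a < b) && (g a == g b)]).
  case/existsP => a /existsP [b /andP [Hab /eqP Eab]].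
  have Ha := ltn_ord a; have Hb := ltn_ord b.
  have W1 := sub_walk Hw (ltnW Hab) (ltnW Hb).
  have W2 := wrap_walk Hw Hc (ltnW Hab) Hb.
  have : odd (b - a) || odd (M - b + a).
    have: odd ((b - a) + (M - b + a)) by have -> : b - a + (M - b + a) = M by lia.
    rewrite oddD. by case: (odd _); case: (odd _).
  case/orP => Ho.
  - apply: (IH' _ _ _ W1 _ Ho); first lia. rewrite /= addn0 subnKC ?Eab //. exact: ltnW.
  - apply: (IH' _ _ _ W2 _ Ho); first lia.
    have -> : (M - b + a < M - b) = false by lia.
    have -> : (0 < M - b) = true by lia.
    by rewrite addn0 addKn Eab.
move/existsPn => Hrep.
have Hinj : forall a b, a < M -> b < M -> g a = g b -> a = b.
  move=> a b Ha Hb Eab; case: (ltngtP a b) => // H.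
  - by move: (Hrep (Ordinal Ha)) => /existsPn /(_ (Ordinal Hb)); rewrite /= H Eab eqxx.
  - by move: (Hrep (Ordinal Hb)) => /existsPn /(_ (Ordinal Ha)); rewrite /= H Eab eqxx.
case: (boolP [exists a : 'I_M, exists b : 'I_M,
   [&& (a : nat).+1 < b, ~~ (((a : nat) == 0) && ((b : nat) == M.-1)) & e (g a) (g b)]]).
  case/existsP => a /existsP [b /and3P [Hab Hn Heab]].
  have Ha := ltn_ord a; have Hb := ltn_ord b.
  have Hn' : a != 0 :> nat \/ b != M.-1 :> nat by move: Hn; rewrite negb_and => /orP.
  have W3 := close_walk (sub_walk Hw (ltnW (ltnW Hab)) (ltnW Hb)).
  have W4 := close_walk (wrap_walk Hw Hc (ltnW (ltnW Hab)) Hb).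
  have : odd (b - a).+1 || odd (M - b + a).+1.
    have Es : (b - a).+1 + (M - b + a).+1 = M.+2 by lia.
    have: odd ((b - a).+1 + (M - b + a).+1) by rewrite Es /= negbK.
    rewrite oddD. by case: (odd _); case: (odd _).
  case/orP => Ho.
  - apply: (IH' _ _ _ (W3 _) _ Ho).
    + case: Hn' => /eqP Hn'; lia.
    + rewrite /= addn0 subnKC; first by rewrite esym. exact: ltnW (ltnW Hab).
    + by rewrite /= ltnn ?leq0n.
  - have E1 : (M - b + a < M - b) = false by lia.
    have E2 : (0 < M - b) = true by lia.
    apply: (IH' _ _ _ (W4 _) _ Ho).
    + lia.
    + by rewrite /= E1 E2 addn0 addKn.
    + by rewrite /= ltnn ?leq0n E2 addn0.
move/existsPn => Hch.
have Hchord : forall a b, a < b -> b < M -> e (g a) (g b) -> b = a.+1 \/ (a = 0 /\ b = M.-1).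
  move=> a b Hab Hb Heab. have Ha : a < M by lia.
  move: (Hch (Ordinal Ha)) => /existsPn /(_ (Ordinal Hb)) /=. rewrite Heab andbT.
  case: (ltnP a.+1 b) => H /=; last lia.
  rewrite negbK => /andP [/eqP -> /eqP ->]; by right.
have HM0 : 0 < M by case: M {IH IH' Hw Hc Hrep Hinj Hch Hchord} HM.
have HM3 : 2 < M.
  case: M {IH IH' Hrep Hinj Hch Hchord HM0} Hw Hc HM => [|[|[|M']]] //= Hw Hc _.
  by move: (Hw 0 isT); rewrite Hc eirr.
pose i0 := Ordinal HM0.
pose F x := if [pick k : 'I_M | dist e (g k) x == dist e (g k.+1) x] is Some k then k else i0.
have Fi : injective F.
  move=> x y; rewrite /F.
  case: pickP => [k /eqP Hk|Hn]; last first.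
    have [k Hk Heq] := parity esym conn x Hw Hc HM. by move: (Hn (Ordinal Hk)); rewrite /= Heq eqxx.
  case: pickP => [k' /eqP Hk'|Hn]; last first.
    have [k'' Hk'' Heq] := parity esym conn y Hw Hc HM. by move: (Hn (Ordinal Hk'')); rewrite /= Heq eqxx.
  move=> Ekk; subst k'. exact: (H1 (Hw k (ltn_ord k)) Hk Hk').
have HcardT : #|T| <= M by have := leq_card F Fi; rewrite card_ord.
pose g' := fun i : 'I_M => g i.
have g'i : injective g'.
  move=> i j /Hinj E; apply: val_inj; exact: E.
have g'b : bijective g' by apply: inj_card_bij g'i _; rewrite card_ord.
have Hadj : forall i j : 'I_M, (j : nat) = (i : nat).+1 %% M -> e (g i) (g j).
  move=> i j Ej. case: (ltnP (i : nat).+1 M) => H.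
    rewrite modn_small in Ej => //. rewrite Ej. exact: Hw.
  have Ei : (i : nat).+1 = M by have := ltn_ord i; lia.
  rewrite Ei modnn in Ej. rewrite Ej -Hc. have := Hw i (ltn_ord i). by rewrite Ei.
exists M; split => //; exists g'; split => //.
move=> i j; rewrite /cycle_rel /g'. apply/idP/idP.
- move=> Heij.
  case: (ltngtP i j) => H.
  + case: (Hchord _ _ H (ltn_ord j) Heij) => [Ej|[Ei Ej]].
      by apply/orP; left; rewrite Ej modn_small // -Ej.
    apply/orP; right; rewrite Ei Ej prednK // modnn //.
  + have Heji : e (g j) (g i) by rewrite esym.
    case: (Hchord _ _ H (ltn_ord i) Heji) => [Ei|[Ej Ei]].
      by apply/orP; right; rewrite Ei modn_small // -Ei.
    apply/orP; left; rewrite Ei Ej prednK // modnn //.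
  + have E : i = j by apply: val_inj.
    by move: Heij; rewrite E eirr.
- case/orP => /eqP Ej; first exact: Hadj.
  rewrite esym; exact: Hadj.
Qed.

End Main.

Definition fwd n i j := if i <= j then j - i else n + j - i.
Definition cd n i j := minn (fwd n i j) (n - fwd n i j).
Definition adjn n a b := b = a.+1 \/ (a = n.-1 /\ b = 0).
Ltac split_ifs := repeat match goal with |- context[if ?b then _ else _] => let E := fresh "E" in case E: b end.

Lemma fwd_lt n a c : a < n -> c < n -> fwd n a c < n.
Proof. move=> *; rewrite /fwd; split_ifs; move=> *; lia. Qed.
Lemma fwd_inj n a c c' : a < n -> c < n -> c' < n -> fwd n a c = fwd n a c' -> c = c'.
Proof. move=> ? ? ?; rewrite /fwd; split_ifs; move=> *; lia. Qed.
Lemma fwd_succ n a b c : a < n -> b < n -> c < n -> adjn n a b ->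
  (fwd n a c = 0 /\ fwd n b c = n.-1) \/ fwd n a c = (fwd n b c).+1.
Proof. move=> Ha Hb Hc [E|[E E']]; subst; rewrite /fwd; split_ifs; move=> *; lia. Qed.
Lemma min_eq n k d d' : 0 < k -> n = k.*2.+1 -> d < n ->
  ((d = 0 /\ d' = n.-1) \/ d = d'.+1) -> minn d (n - d) = minn d' (n - d') -> d = k.+1.
Proof. move=> *; lia. Qed.
Lemma cd_uniq n k a b c c' : 0 < k -> n = k.*2.+1 -> a < n -> b < n -> c < n -> c' < n ->
  adjn n a b -> cd n a c = cd n b c -> cd n a c' = cd n b c' -> c = c'.
Proof. rewrite /cd => Hk En Ha Hb Hc Hc' Hab H1 H2. apply: (fwd_inj Ha Hc Hc').
rewrite (min_eq Hk En (fwd_lt Ha Hc) (fwd_succ Ha Hb Hc Hab) H1).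
by rewrite (min_eq Hk En (fwd_lt Ha Hc') (fwd_succ Ha Hb Hc' Hab) H2).
Qed.
Lemma cd_step n a i j : a < n -> i < n -> j < n -> adjn n i j ->
  cd n a j <= (cd n a i).+1 /\ cd n a i <= (cd n a j).+1.
Proof. move=> Ha Hi Hj [->|[-> ->]]; split; rewrite /cd /fwd; split_ifs; move=> *; lia. Qed.
Lemma cd_pred n a c : a < n -> c < n -> c != a ->
  exists2 p, p < n & (adjn n p c \/ adjn n c p) /\ (cd n a p).+1 = cd n a c.
Proof.
move=> Ha Hc /eqP Hca. rewrite /adjn /cd.
case: (leqP (fwd n a c) (n - fwd n a c)) => H.
- exists (if c == 0 then n.-1 else c.-1).
  + case: ifP => _; lia.
  + move: H; rewrite /fwd. case: (eqVneq c 0) => Hc0.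
      subst; split_ifs; move=> *; lia.
    split_ifs; move=> *; lia.
- exists (if c.+1 == n then 0 else c.+1).
  + case: ifP => /eqP ?; lia.
  + move: H; rewrite /fwd. case: (eqVneq c.+1 n) => Hc0.
      split_ifs; move=> *; lia.
    split_ifs; move=> *; lia.
Qed.

Lemma lG_le (T : finType) (e : rel T) u v : e u v -> lG e <= #|L e u v|.
Proof.
move=> Huv. rewrite /lG.
move: (mem_index_enum (u, v)).
elim: (index_enum _) => [//|p r IH]; rewrite in_cons big_cons.
case/orP => [/eqP <-|/IH H]; first by rewrite Huv geq_minl.
case: ifP => _ //. exact: leq_trans (geq_minr _ _) H.
Qed.

Lemma lG_ge (T : finType) (e : rel T) m : m <= #|T| ->
  (forall u v, e u v -> m <= #|L e u v|) -> m <= lG e.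
Proof.
move=> H0 H. rewrite /lG. apply: (big_ind (fun x => m <= x)) => //.
  move=> x y hx hy; by rewrite leq_min hx hy.
move=> [u v] /=; exact: H.
Qed.

Lemma cyc_adj n (i j : 'I_n) : cycle_rel i j -> adjn n i j \/ adjn n j i.
Proof.
have H : forall a b : 'I_n, (b : nat) = (a : nat).+1 %% n -> adjn n a b.
  move=> a b E. have Ha := ltn_ord a. case: (ltnP (a : nat).+1 n) => H.
    by left; rewrite E modn_small.
  have Ea : (a : nat).+1 = n by lia.
  right; split; [lia | by rewrite E Ea modnn].
by case/orP => /eqP E; [left | right]; apply: H.
Qed.

Lemma adj_cyc n (i j : 'I_n) : adjn n i j -> cycle_rel i j.
Proof.
move=> [E|[Ei Ej]]; apply/orP; left; apply/eqP.
  by rewrite E modn_small // -E.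
have Hi := ltn_ord i. by rewrite Ej Ei prednK ?modnn //; lia.
Qed.

Lemma backward (T : finType) (e : rel T) : symmetric e -> connected e ->
  iso_odd_cycle e -> lG e = #|T| - 1.
Proof.
move=> Hsym conn [n [Hodd Hn3 [f [fb fe]]]].
have Hcard : #|T| = n by rewrite -(bij_eq_card fb) card_ord.
case: fb => fi fK fiK.
have Hn0 : 0 < n by lia.
have Hdist : forall (a : 'I_n) x, dist e (f a) x = cd n a (fi x).
  move=> a. apply: (dist_bfs conn).
  - by rewrite fK /cd /fwd leqnn subnn min0n.
  - move=> x y Hxy. rewrite -(fiK x) -(fiK y) fe in Hxy.
    case: (cyc_adj Hxy) => H.
      by case: (cd_step (ltn_ord a) (ltn_ord _) (ltn_ord _) H).
    by case: (cd_step (ltn_ord a) (ltn_ord _) (ltn_ord _) H).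
  - move=> x Hx.
    have Hc : (fi x : nat) != a.
      apply/negP => /eqP E. move: Hx. rewrite -(fiK x) (_ : fi x = a) ?eqxx //. exact: val_inj.
    have [p Hp [Hpadj Hpd]] := cd_pred (ltn_ord a) (ltn_ord (fi x)) Hc.
    exists (f (Ordinal Hp)); last by rewrite fK.
    rewrite -(fiK x) fe. case: Hpadj => H; first exact: adj_cyc.
    have := adj_cyc (i := fi x) (j := Ordinal Hp) H. by rewrite /cycle_rel orbC.
have Hnk : n = (n./2).*2.+1 by have := odd_double_half n; rewrite Hodd; lia.
have Hk0 : 0 < n./2 by lia.
apply/eqP; rewrite eqn_leq; apply/andP; split; last first.
  apply: lG_ge; first lia.
  move=> u v Huv.
  rewrite -(fiK u) -(fiK v) fe in Huv.
  have Hc := cardsC (L e u v).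
  case: (set_0Vmem (~: L e u v)) => [E|[x0 Hx0]].
    rewrite E cards0 in Hc; lia.
  have Hs : ~: L e u v \subset [set x0].
    apply/subsetP => y Hy; rewrite in_set1; apply/eqP.
    move: Hy Hx0; rewrite !inE !negbK => /eqP Hy /eqP Hx0.
    move: Hy Hx0; rewrite -(fiK u) -(fiK v) !Hdist => Hy Hx0.
    apply: (can_inj fiK); apply: val_inj.
    case: (cyc_adj Huv) => H.
      exact: (cd_uniq Hk0 Hnk (ltn_ord _) (ltn_ord _) (ltn_ord _) (ltn_ord _) H Hy Hx0).
    apply: (cd_uniq Hk0 Hnk (ltn_ord _) (ltn_ord _) (ltn_ord _) (ltn_ord _) H); by apply: esym.
  have := subset_leq_card Hs. rewrite cards1. lia.
pose i0 := Ordinal Hn0.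
pose g k := f (insubd i0 k).
have Hw : walk e g n.
  move=> k Hk. rewrite /g fe. apply: adj_cyc. rewrite /adjn !val_insubd Hk.
  case: (ltnP k.+1 n) => H; [by left | right; split => //; lia].
have Hc : g n = g 0.
  rewrite /g; congr f; apply: val_inj; by rewrite !val_insubd ltnn Hn0.
have [k Hkn Heq] := parity Hsym conn (f i0) Hw Hc Hodd.
apply: leq_trans (lG_le (Hw k Hkn)) _.
have Hs : L e (g k) (g k.+1) \subset [set~ f i0].
  apply/subsetP => y; rewrite !inE. apply: contra => /eqP ->. by rewrite Heq.
have := subset_leq_card Hs. rewrite cardsC1. lia.
Qed.

Lemma dist0 (T : finType) (e : rel T) u x : connected e -> dist e u x = 0 -> x = u.
Proof.
move=> conn H. have [Hx _] := dist_ball (conn u x). rewrite H /= in_set1 in Hx. exact/eqP.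
Qed.

Theorem theorem2p11 (T : finType) (e : rel T) :
  symmetric e -> irreflexive e -> connected e ->
  (exists u v : T, e u v) ->
  (lG e = #|T| - 1 <-> iso_odd_cycle e).
Proof.
move=> Hsym Hirr Hconn [u0 [v0 Huv0]]; split; last exact: backward.
move=> HlG.
have H1 : forall u v x y, e u v -> dist e u x = dist e v x -> dist e u y = dist e v y -> x = y.
  move=> u v x y Huv Hx Hy; apply/eqP/negPn/negP => Hxy.
  have Hs : L e u v \subset ~: [set x; y].
    apply/subsetP => z; rewrite !inE => Hz; apply/negP => /orP [/eqP E|/eqP E]; subst z.
      by rewrite Hx eqxx in Hz.
    by rewrite Hy eqxx in Hz.
  have := subset_leq_card Hs. have := cardsC [set x; y]. rewrite cards2 Hxy.
  have := lG_le Huv. lia.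
case: (boolP [exists p : T * T, e p.1 p.2 && [exists x, dist e p.1 x == dist e p.2 x]]); last first.
  move/existsPn => Hn.
  have : #|T| <= lG e.
    apply: lG_ge => // u v Huv.
    have : [set: T] \subset L e u v.
      apply/subsetP => x _; rewrite inE.
      move: (Hn (u, v)); rewrite /= Huv /= => /existsPn /(_ x). by [].
    move/subset_leq_card; by rewrite cardsT.
  have : 0 < #|T| by apply/card_gt0P; exists u0.
  lia.
case/existsP => [[u v]] /andP [/= Huv /existsP [x /eqP Hx]].
have [p1 [P10 P1d P1w]] := dist_walk Hconn u x.
have [p2 [P20 P2d P2w]] := dist_walk Hconn v x.
rewrite -Hx in P2d P2w.
move: Hx P1d P1w P2d P2w. set d := dist e u x => Hx P1d P1w P2d P2w.
have Hd : 0 < d.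
  case: (posnP d) => // Hd0.
  have Exu := dist0 Hconn Hd0. rewrite Hx in Hd0. have Exv := dist0 Hconn Hd0.
  by move: Huv; rewrite -Exu -Exv Hirr.
pose g k := if k <= d then p1 k else if k <= d.*2 then p2 (d.*2 - k) else u.
apply: (main Hsym Hirr Hconn H1 (M := d.*2.+1) (g := g)).
- move=> k Hk; rewrite /g.
  have [H|H] : k < d \/ d <= k by lia.
    have -> : (k <= d) = true by lia.
    have -> : (k.+1 <= d) = true by lia.
    exact: P1w.
  have Gk : (if k <= d then p1 k else if k <= d.*2 then p2 (d.*2 - k) else u) = p2 (d.*2 - k).
    have [H'|H'] : d < k \/ k = d by lia.
      have -> : (k <= d) = false by lia.
      by have -> : (k <= d.*2) = true by lia.
    subst k. rewrite leqnn P1d -P2d. congr p2. lia.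
  rewrite Gk.
  have -> : (k.+1 <= d) = false by lia.
  have [H2|H2] : k < d.*2 \/ d.*2 <= k by lia.
    have -> : (k.+1 <= d.*2) = true by lia.
    rewrite Hsym. have := P2w (d.*2 - k.+1) ltac:(lia).
    by have -> : (d.*2 - k.+1).+1 = d.*2 - k by lia.
  have -> : (k.+1 <= d.*2) = false by lia.
  have -> : d.*2 - k = 0 by lia.
  by rewrite P20 Hsym.
- rewrite /g. have -> : (d.*2.+1 <= d) = false by lia.
  have -> : (d.*2.+1 <= d.*2) = false by lia.
  by rewrite leq0n P10.
- by rewrite /= odd_double.
Qed.
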